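(* Let $N$ be a positive integer and let $1\le r<s\le N$ be integers. Then there exists $n_0$ such that $\widehat{T}_{r,N}(n)\ge \widehat{T}_{s,N}(n)$ for all integers $n\ge n_0$.
   Context: A partition $\lambda=(\lambda_0,\dots,\lambda_k)$ is a non-increasing finite sequence of positive integers, with size $|\lambda|=\sum_j\lambda_j$. For positive integers $r,N$, let $T_{r,N}(\lambda)$ be the number of indices $j$ with $\lambda_j\equiv r\pmod N$ (parts counted with multiplicity), and for a positive integer $n$ let $\widehat{T}_{r,N}(n)=\sum_{|\lambda|=n}T_{r,N}(\lambda)$, the sum over all partitions of $n$. *)

(* Defs.v *)
From mathcomp Require Import all_boot.
Set Implicit Arguments. Unset Strict Implicit. Unset Printing Implicit Defensive.

Definition is_partition (n : nat) (s : seq nat) : bool :=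
  [&& sorted geq s, all (fun x => 0 < x) s & sumn s == n].

Definition T (r N : nat) (s : seq nat) : nat :=
  count (fun x => x == r %[mod N]) s.

Fixpoint all_seqs (k b : nat) : seq (seq nat) :=
  if k is k'.+1 then
    [seq x :: t | x <- iota 0 b.+1, t <- all_seqs k' b]
  else [:: [::]].

(* Candidate lists for partitions of n: every partition of n has at most n
   parts, each at most n. *)
Definition cand_seqs (n : nat) : seq (seq nat) :=
  flatten [seq all_seqs k n | k <- iota 0 n.+1].

Definition partitions (n : nat) : seq (seq nat) :=
  [seq s <- cand_seqs n | is_partition n s].

Definition That (r N n : nat) : nat := \sum_(s <- partitions n) T r N s.

(* Main.v *)
Require Import Defs.
From mathcomp Require Import all_boot zify.

Lemma mem_all_seqs k b t : (t \in all_seqs k b) = (size t == k) && all (fun x => x <= b) t.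
Proof.
elim: k t => [|k IH] t; first by case: t.
apply/idP/idP => [/allpairsPdep[x [u [/= hx hu ->]]]|].
  rewrite /= eqSS; rewrite IH in hu; case/andP: hu => -> ->; move: hx; change (x \in iota 0 b.+1 -> [&& true, x <= b & true]); rewrite mem_iota; lia.
case: t => [|x u] //=; rewrite eqSS => /andP[hs /andP[hx ha]].
apply/(@allpairsPdep _ (fun _ => _) _ (fun x u => x :: u) (iota 0 b.+1) (fun _ => all_seqs k b)); exists x, u; split => //; [rewrite mem_iota; lia | rewrite IH hs].
exact: ha.
Qed.

Lemma uniq_all_seqs k b : uniq (all_seqs k b).
Proof.
elim: k => [|k IH] //.
change (uniq [seq x :: t | x <- iota 0 b.+1, t <- all_seqs k b]).
apply: allpairs_uniq => //; first exact: iota_uniq.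
by move=> [x u] [y w] _ _ /= [-> ->].
Qed.

Lemma uniq_flatten_map (A B : eqType) (f : A -> seq B) s :
  uniq s -> (forall x, uniq (f x)) ->
  (forall x y z, z \in f x -> z \in f y -> x = y) ->
  uniq (flatten (map f s)).
Proof.
move=> us uf dj; elim: s us => //= x s IH /andP[xs us].
rewrite cat_uniq uf IH // andbT /=; apply/hasP => -[z /flatten_mapP[y ys zy] zx].
by move: xs; rewrite (dj _ _ _ zx zy) ys.
Qed.

Lemma uniq_partitions n : uniq (partitions n).
Proof.
apply: filter_uniq; apply: uniq_flatten_map; first exact: iota_uniq.
  by move=> k; apply: uniq_all_seqs.
by move=> x y z; rewrite !mem_all_seqs => /andP[/eqP <- _] /andP[/eqP <-].
Qed.

Lemma size_le_sumn l : all (fun x => 0 < x) l -> size l <= sumn l.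
Proof. by elim: l => //= x l IH /andP[hx /IH]; lia. Qed.

Lemma elem_le_sumn l : all (fun x => x <= sumn l) l.
Proof.
elim: l => //= x l IH; rewrite leq_addr /=.
by apply/allP => y /(allP IH); lia.
Qed.

Lemma mem_partitions n l : (l \in partitions n) = is_partition n l.
Proof.
rewrite mem_filter andb_idr // => /and3P[_ hp /eqP hs].
apply/flatten_mapP; exists (size l).
  by rewrite mem_iota /= -hs ltnS size_le_sumn.
by rewrite mem_all_seqs eqxx -hs elem_le_sumn.
Qed.

Definition VJ (P : pred nat) (l : seq nat) : seq (nat * nat) :=
  [seq (v, j) | v <- filter P (undup l), j <- iota 1 (count_mem v l)].

Definition trip (P : pred nat) n : seq (seq nat * (nat * nat)) :=
  flatten [seq [seq (l, p) | p <- VJ P l] | l <- partitions n].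

Lemma sum_eq_count (x : nat) w : \sum_(v <- w) (x == v) = count_mem x w.
Proof. by elim: w => [|y w IH]; rewrite ?big_nil ?big_cons //= IH eq_sym. Qed.

Lemma count_sum (P : pred nat) l u : uniq u -> {subset l <= u} ->
  sumn [seq count_mem v l | v <- filter P u] = count P l.
Proof.
move=> uu; elim: l => [|x l IH] sub.
  by rewrite sumnE big_map big1.
rewrite sumnE big_map /=.
rewrite (eq_bigr (fun v => (x == v) + count_mem v l)); last first.
  by move=> v _; rewrite /= eq_sym.
have IH' := IH (fun y yl => sub y (@mem_behead _ (x :: l) y yl)).
rewrite sumnE big_map in IH'.
rewrite big_split /= sum_eq_count IH'.
rewrite count_uniq_mem ?filter_uniq // mem_filter sub ?mem_head // andbT.
by [].
Qed.

Lemma size_VJ P l : size (VJ P l) = count P l.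
Proof.
rewrite /VJ size_allpairs_dep -(@count_sum P l (undup l)) ?undup_uniq //;
  last by move=> y; rewrite mem_undup.
by congr sumn; apply: eq_map => v; rewrite size_iota.
Qed.

Lemma mem_VJ P l v j : ((v, j) \in VJ P l) = [&& P v, v \in l & 0 < j <= count_mem v l].
Proof.
apply/idP/idP.
  case/allpairsPdep => [v' [j' [hv hj [-> ->]]]].
  move: hv hj; rewrite mem_filter mem_undup mem_iota => /andP[-> ->] /=; lia.
case/and3P => pv vl hj; apply/allpairsPdep; exists v, j; split => //.
  by rewrite mem_filter pv mem_undup.
by rewrite mem_iota; lia.
Qed.

Lemma size_trip r N n : size (trip (fun x => x == r %[mod N]) n) = That r N n.
Proof.
rewrite /trip size_flatten /shape -map_comp sumnE big_map /That.
by apply: eq_bigr => l _ /=; rewrite size_map size_VJ.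
Qed.

Lemma mem_trip P n l v j : ((l, (v, j)) \in trip P n) =
   (l \in partitions n) && ((v, j) \in VJ P l).
Proof.
apply/flatten_mapP/andP => [[l' hl' /mapP[p hp [-> ->]]]|[hl hv]] //.
by exists l => //; apply: map_f.
Qed.

Lemma uniq_trip P n : uniq (trip P n).
Proof.
apply: uniq_flatten_map; first exact: uniq_partitions.
  move=> l; rewrite map_inj_uniq; last by move=> a b [].
  apply: allpairs_uniq_dep; first by rewrite filter_uniq ?undup_uniq.
    by move=> v _; apply: iota_uniq.
  by move=> [a b] [c d] _ _ /= [-> ->].
by move=> x y z /mapP[p _ ->] /mapP[q _ []].
Qed.

Definition mu d (l : seq nat) v j : seq nat :=
  sort geq (nseq j (v - d) ++ nseq (j * d) 1 ++ filter (predC1 v) l ++ nseq (count_mem v l - j) v).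

Lemma count_mu d l v j x : j <= count_mem v l ->
  count_mem x (mu d l v j) + (v == x) * j =
  count_mem x l + (v - d == x) * j + (1 == x) * (j * d).
Proof.
move=> hj; rewrite /mu count_sort !count_cat !count_nseq count_filter.
case: (eqVneq v x) => [<-|nvx] /=.
  rewrite (eq_count (a2 := pred0)); last by move=> y /=; case: (y == v).
  rewrite count_pred0 eqxx mul1n; move: ((v - d == v) * j) ((1 == v) * (j * d)) => X Y /=.
  move: hj; set c := count _ l; lia.
rewrite (eq_count (a2 := pred1 x)); last first.
  move=> y /=; case: (eqVneq y x) => [->|nyx]; [by rewrite eq_sym nvx | by []].
move: nvx; case: (v == x) => //= _; move: ((v - d == x) * j) ((1 == x) * (j * d)) => X Y /=; lia.
Qed.

Lemma sumn_filter v l : sumn l = sumn (filter (predC1 v) l) + v * count_mem v l.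
Proof.
elim: l => [|x l IH] /=; first by rewrite muln0.
case: (eqVneq x v) => [->|nxv] /=; rewrite IH ?eqxx ?nxv /=; lia.
Qed.

Lemma sumn_mu d l v j : j <= count_mem v l -> d <= v ->
  sumn (mu d l v j) + v * j = sumn l + (v - d) * j + j * d.
Proof.
move=> hj hd; rewrite /mu (perm_sumn (permEl (perm_sort _ _))) !sumn_cat !sumn_nseq.
rewrite [sumn l](sumn_filter v).
have e1 : (count_mem v l - j) * v + j * v = count_mem v l * v by rewrite -mulnDl subnK.
have e2 : (v - d) * j + d * j = v * j by rewrite -mulnDl subnK.
nia.
Qed.

Lemma resid N r s v : 0 < N -> 1 <= r -> r < s -> s <= N ->
  0 < v -> v == s %[mod N] -> (s - r < v) && (v - (s - r) == r %[mod N]).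
Proof.
move=> N0 r1 rs sN v0 /eqP hv.
have hr : r %% N = r by rewrite modn_small //; lia.
have hd := divn_eq v N.
set q := v %/ N in hd.
case: (ltnP s N) => sN'.
  have hs : s %% N = s by rewrite modn_small.
  rewrite hv hs in hd.
  have -> : v - (s - r) = q * N + r by lia.
  by rewrite modnMDl hr eqxx andbT; lia.
have sNe : s = N by lia.
rewrite sNe modnn in hv; rewrite hv addn0 in hd.
have q0 : 0 < q by rewrite lt0n; apply/eqP => q0; rewrite q0 in hd; lia.
have e : q * N = q.-1 * N + N by rewrite -{1}(prednK q0) mulSn addnC.
have -> : v - (s - r) = q.-1 * N + r by move: e; move: (q.-1 * N) (q * N) hd => M K hd e; lia.
by rewrite modnMDl hr eqxx andbT; lia.
Qed.

Lemma geq_anti : antisymmetric geq.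
Proof. by move=> a b /andP[h1 h2]; apply: anti_leq; apply/andP; split. Qed.
Lemma geq_tr : transitive geq.
Proof. by move=> a b c h1 h2; exact: leq_trans h2 h1. Qed.
Lemma geq_tot : total geq.
Proof. by move=> a b; exact: leq_total. Qed.

Theorem mainTheorem2 (N r s : nat) :
  0 < N -> 1 <= r -> r < s -> s <= N ->
  exists n0 : nat, forall n : nat, n0 <= n -> That s N n <= That r N n.
Proof.
move=> N0 r1 rs sN; exists 0 => n _.
set d := s - r.
pose f (t : seq nat * (nat * nat)) := (mu d t.1 t.2.1 t.2.2, (t.2.1 - d, t.2.2)).
rewrite -!size_trip -(size_map f).
have key : forall l v j, (l, (v, j)) \in trip (fun x => x == s %[mod N]) n ->
   [/\ is_partition n l, 0 < j <= count_mem v l, v \in l,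
       d < v & v - d == r %[mod N]].
  move=> l v j; rewrite mem_trip mem_partitions mem_VJ => /andP[pl /and3P[pv vl hj]].
  have vpos : 0 < v by case/and3P: pl => _ /allP /(_ v vl).
  by case/andP: (resid N r s v N0 r1 rs sN vpos pv).
apply: uniq_leq_size.
  rewrite map_inj_in_uniq ?uniq_trip //.
  move=> [l1 [v1 j1]] [l2 [v2 j2]] h1 h2 /= [].
  have [p1 c1 _ d1 _] := key _ _ _ h1; have [p2 c2 _ d2 _] := key _ _ _ h2.
  move=> em ev ej; subst j2.
  have ev' : v1 = v2 by lia.
  subst v2; congr (_, (_, _)).
  case/and3P: p1 => so1 _ _; case/and3P: p2 => so2 _ _.
  apply: (sorted_eq geq_tr geq_anti) => //.
  apply/allP => x _ /=; apply/eqP.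
  have := count_mu d l1 v1 j1 x (proj2 (andP c1)); have := count_mu d l2 v1 j1 x (proj2 (andP c2)).
  rewrite em => -> /eqP; rewrite !eqn_add2r => /eqP ->; by [].
move=> t /mapP [[l [v j]] ht ->] /=.
have [pl /andP[j0 cj] vl dv rv] := key _ _ _ ht.
case/and3P: pl => sol pos /eqP sl.
have hc := count_mu d l v j (v - d) cj.
rewrite mem_trip mem_partitions mem_VJ rv /=.
have nv : (v == v - d) = false by apply/negbTE; lia.
rewrite nv eqxx in hc.
have cm : j <= count_mem (v - d) (mu d l v j).
  move: hc => /=; move: ((1 == v - d) * (j * d)) => Z; rewrite mul0n addn0 mul1n => ->; rewrite -addnA addnC -addnA; exact: leq_addr.
apply/andP; split; last first.
  apply/andP; split; [rewrite -has_pred1 has_count; exact: leq_trans j0 cm | by rewrite j0 cm].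
apply/and3P; split.
- exact: sort_sorted geq_tot _.
- apply/allP => x; rewrite /mu mem_sort !mem_cat => /or4P[].
  + by move/nseqP => [-> _]; lia.
  + by move/nseqP => [-> _].
  + by rewrite mem_filter => /andP[_ /(allP pos)].
  + by move/nseqP => [-> _]; lia.
- apply/eqP; have := sumn_mu d l v j cj (ltnW dv); rewrite sl; nia.
Qed.
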